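(* Let $X \sim \mathcal{N}(\mu,\sigma^2)$ be a single observation, with $\mu\in\mathbb{R}$ and $\sigma>0$ unknown, and for $c>1$ let $I_1(c) = (X - c|X|,\; X + c|X|)$. Then the coverage probability $P_{\mu,\sigma}(\mu \in I_1(c))$ depends on $(\mu,\sigma)$ only through $\lambda=\mu/\sigma$ and is an even function of $\lambda$. Writing $\lambda = |\mu|/\sigma \ge 0$, it equals $$P_1(\lambda,c) = \Phi\Big(\frac{c}{c+1}\lambda\Big) + 1 - \Phi\Big(\frac{c}{c-1}\lambda\Big).$$ Over $\lambda\ge 0$, $P_1(\lambda,c)$ is minimized at $$\lambda^*(c) = \frac{c^2-1}{\sqrt{2}\,c^{3/2}}\sqrt{\log\frac{c+1}{c-1}}.$$ Consequently, for every $\alpha$ with $0<\alpha<1/2$ there exists a constant $c=c(\alpha)>1$ such that $\inf_{\mu\in\mathbb{R},\sigma>0} P_{\mu,\sigma}(\mu\in I_1(c(\alpha))) \ge 1-\alpha$.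
   Context: $\Phi$ denotes the standard normal cumulative distribution function. $I_1(c)$ is the (Abbott–Rosenblatt) interval centered at the single observation $X$ with half-length $c|X|$. *)

(* Defs.v *)
From HB Require Import structures.
From mathcomp Require Import all_boot all_order all_algebra.
From mathcomp Require Import all_classical all_reals all_analysis.
Set Implicit Arguments. Unset Strict Implicit. Unset Printing Implicit Defensive.
Import Order.TTheory GRing.Theory Num.Theory.
Local Open Scope classical_set_scope.
Local Open Scope ring_scope.

(* Standard normal CDF: Phi x = P(Z <= x), Z ~ N(0,1), via the library's
   normal probability measure (normal_prob m s has mean m, std. dev. s). *)
Definition Phi {R : realType} (x : R) : R :=
  fine (normal_prob 0 1 [set y : R | y <= x]).

Definition I1 {R : realType} (c X : R) : set R :=
  [set t : R | X - c * `|X| < t < X + c * `|X|].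

Definition coverage {R : realType} (mu sigma c : R) : \bar R :=
  normal_prob mu sigma [set X : R | mu \in I1 c X].

Definition P1 {R : realType} (lambda c : R) : R :=
  Phi (c / (c + 1) * lambda) + 1 - Phi (c / (c - 1) * lambda).

Definition lambda_star {R : realType} (c : R) : R :=
  (c ^+ 2 - 1) / (Num.sqrt 2 * powR c (3 / 2)) * Num.sqrt (ln ((c + 1) / (c - 1))).

(* Main.v *)
Require Import Defs.
From HB Require Import structures.
From mathcomp Require Import all_boot all_order all_algebra.
From mathcomp Require Import all_classical all_reals all_analysis.
From mathcomp Require Import ring lra measurable_realfun.
Import Order.TTheory GRing.Theory Num.Theory.
Import numFieldNormedType.Exports.
Local Open Scope classical_set_scope.
Local Open Scope ring_scope.
Section S.
Variable R : realType.
Local Notation mu := (@lebesgue_measure R).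

Lemma pdf_affine (m s z : R) : 0 < s ->
  normal_pdf m s (s * z + m) * s = normal_pdf 0 1 z.
Proof.
move=> s0; rewrite /normal_pdf gt_eqF// oner_eq0 /normal_peak /normal_fun.
rewrite addrK subr0 expr1n mul1r exprMn.
have -> : - (s ^+ 2 * z ^+ 2) / (s ^+ 2 *+ 2) = - z ^+ 2 / 2.
  by field; rewrite gt_eqF.
rewrite mulrAC; congr (_ * _).
rewrite -mulrnAr sqrtrM ?sqr_ge0// sqrtr_sqr gtr0_norm// invfM mulrAC mulVf ?mul1r ?gt_eqF//.
Qed.

Lemma cdf_affine (m s x : R) : 0 < s ->
  normal_prob m s `]-oo, x] = normal_prob 0 1 `]-oo, (x - m) / s].
Proof.
move=> s0.
pose F := fun z : R => (z + m / s) * s.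
have Fb : F ((x - m) / s) = x.
  by rewrite /F -mulrDl subrK divfK// gt_eqF.
have dF z : derivable F z 1 by [].
have F'E : F^`()%classic = cst s.
  apply/funext => z; rewrite /F derive1E deriveM// deriveD// derive_cst derive_id.
  by rewrite scaler0 add0r derive_cst addr0; exact: mulr1.
transitivity (normal_prob m s `]-oo, F ((x - m) / s)]); first by rewrite Fb.
rewrite /normal_prob increasing_ge0_integration_by_substitutionNy.
- apply: eq_integral => z _; rewrite F'E.
  change (EFin (normal_pdf m s (F z) * s) = EFin (normal_pdf 0 1 z)).
  by rewrite /F mulrDl divfK ?gt_eqF// (mulrC z s) pdf_affine.
- by move=> u v _ _ uv; rewrite /F ltr_pM2r// ltrD2r.
- by rewrite F'E => u _; exact: cvg_cst.
- by rewrite F'E; exact: is_cvg_cst.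
- by rewrite F'E; exact: cvg_cst.
- split; first by move=> u _.
  apply: cvg_at_left_filter; exact: differentiable_continuous.
- apply: gt0_cvgMlNy => //; exact: cvg_addrr_Ny.
- have h : continuous (normal_pdf m s : R -> R) by apply: continuous_normal_pdf; rewrite gt_eqF.
  apply: continuous_subspaceT.
  exact: h.
- by move=> u _; apply: normal_pdf_ge0.
Qed.

Lemma PhiE (x : R) : normal_prob 0 1 `]-oo, x] = (Phi x)%:E.
Proof.
rewrite /Phi set_itvNyc fineK //; apply: fin_num_measure; rewrite -set_itvNyc.
exact: measurable_itv.
Qed.

Lemma prob_open (m s x : R) :
  normal_prob m s `]-oo, x[ = normal_prob m s `]-oo, x].
Proof.
rewrite /normal_prob integral_itv_bndo_bndc //.
apply/measurable_EFinP; apply: measurable_funTS; exact: measurable_normal_pdf.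
Qed.

Lemma prob_gt (m s x : R) :
  normal_prob m s `]x, +oo[ = (1 - normal_prob m s `]-oo, x])%E.
Proof. by rewrite -setCitvl probability_setC. Qed.

Lemma prob_ge (m s x : R) :
  normal_prob m s `[x, +oo[ = (1 - normal_prob m s `]-oo, x])%E.
Proof. by rewrite -prob_open -setCitvl probability_setC. Qed.

Lemma pdf_even (x : R) : normal_pdf 0 1 (- x) = normal_pdf 0 1 x.
Proof. by rewrite /normal_pdf oner_eq0 /normal_fun !subr0 sqrrN. Qed.

Lemma Phi_sym (t : R) : Phi (- t) = 1 - Phi t.
Proof.
apply: EFin_inj; rewrite -PhiE EFinB -PhiE -prob_ge /normal_prob.
rewrite ge0_integration_by_substitutionNy.
- by apply: eq_integral => z _ /=; rewrite pdf_even.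
- have h : continuous (normal_pdf 0 1 : R -> R).
    by apply: continuous_normal_pdf; rewrite oner_eq0.
  exact: continuous_subspaceT.
- by move=> u _; apply: normal_pdf_ge0.
Qed.
Lemma I1_neg (c m X : R) : 1 < c -> m <= 0 ->
  (X - c * `|X| < m < X + c * `|X|) = (X < m / (c + 1)) || (- m / (c - 1) < X).
Proof.
move=> c1 m0.
have c1p : 0 < c + 1 by lra.
have c1m : 0 < c - 1 by lra.
rewrite ltr_pdivlMr // ltr_pdivrMr //.
have [hX|hX] := lerP 0 X.
- rewrite (ger0_norm hX); apply/idP/idP.
  + move=> /andP[h1 h2]; apply/orP; right; nra.
  + move=> /orP[h|h]; apply/andP; split; nra.
- rewrite (ltr0_norm hX); apply/idP/idP.
  + move=> /andP[h1 h2]; apply/orP; left; nra.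
  + move=> /orP[h|h]; apply/andP; split; nra.
Qed.
Lemma I1_pos (c m X : R) : 1 < c -> 0 < m ->
  (X - c * `|X| < m < X + c * `|X|) = (X < - m / (c - 1)) || (m / (c + 1) < X).
Proof.
move=> c1 m0.
have c1p : 0 < c + 1 by lra.
have c1m : 0 < c - 1 by lra.
rewrite ltr_pdivlMr // ltr_pdivrMr //.
have [hX|hX] := lerP 0 X.
- rewrite (ger0_norm hX); apply/idP/idP.
  + move=> /andP[h1 h2]; apply/orP; right; nra.
  + move=> /orP[h|h]; apply/andP; split; nra.
- rewrite (ltr0_norm hX); apply/idP/idP.
  + move=> /andP[h1 h2]; apply/orP; left; nra.
  + move=> /orP[h|h]; apply/andP; split; nra.
Qed.

Lemma two_tails (m s p q : R) : 0 < s -> p <= q ->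
  normal_prob m s (`]-oo, p[ `|` `]q, +oo[) =
  (Phi ((p - m) / s) + (1 - Phi ((q - m) / s)))%:E.
Proof.
move=> s0 pq.
rewrite measureU; last first.
- apply/seteqP; split => x /=; last by [].
  rewrite !in_itv /= andbT => -[h1 h2].
  have := lt_trans h1 (le_lt_trans pq h2); by rewrite ltxx.
- exact: measurable_itv.
- exact: measurable_itv.
change (normal_prob m s `]-oo, p[ + normal_prob m s `]q, +oo[ =
  (Phi ((p - m) / s) + (1 - Phi ((q - m) / s)))%:E)%E.
rewrite prob_open prob_gt (cdf_affine m s p s0) (cdf_affine m s q s0) !PhiE.
by rewrite EFinD EFinB.
Qed.


Lemma coverage_P1 (m s c : R) : 1 < c -> 0 < s ->
  coverage m s c = (P1 (`|m| / s) c)%:E.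
Proof.
move=> c1 s0.
have c1p : 0 < c + 1 by lra.
have c1m : 0 < c - 1 by lra.
rewrite /coverage /P1.
have [m0|m0] := lerP m 0.
- have -> : [set X : R | m \in I1 c X] = `]-oo, m / (c + 1)[ `|` `]- m / (c - 1), +oo[.
    apply/seteqP; split => X /=; rewrite in_setE /I1 /= !in_itv /= andbT I1_neg //.
      by case/orP => h; [left|right].
    by case => ->; rewrite ?orbT.
  rewrite two_tails; last first.
    apply: (@le_trans _ _ 0).
      by rewrite pmulr_lle0 // invr_gt0.
    by rewrite divr_ge0 // ?oppr_ge0 // ltW.
    exact: s0.
  rewrite ler0_norm //.
  have -> : (m / (c + 1) - m) / s = c / (c + 1) * (- m / s) by field; lra.
  have -> : (- m / (c - 1) - m) / s = c / (c - 1) * (- m / s) by field; lra.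
  congr EFin; ring.
- have -> : [set X : R | m \in I1 c X] = `]-oo, - m / (c - 1)[ `|` `]m / (c + 1), +oo[.
    apply/seteqP; split => X /=; rewrite in_setE /I1 /= !in_itv /= andbT I1_pos //.
      by case/orP => h; [left|right].
    by case => ->; rewrite ?orbT.
  rewrite two_tails; last first.
    apply: (@le_trans _ _ 0).
      by rewrite mulNr oppr_le0 divr_ge0 // ltW.
    by rewrite divr_ge0 // ltW.
    exact: s0.
  rewrite gtr0_norm //.
  have -> : (- m / (c - 1) - m) / s = - (c / (c - 1) * (m / s)) by field; lra.
  have -> : (m / (c + 1) - m) / s = - (c / (c + 1) * (m / s)) by field; lra.
  rewrite !Phi_sym; congr EFin; ring.
Qed.

Lemma Phi_derive (x : R) : is_derive x 1 (@Phi R) (normal_pdf 0 1 x).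
Proof.
pose f := (normal_pdf 0 1 : R -> R).
have PhiF0 y : Phi y = (\int[mu]_(t in [set` Interval -oo%O (BRight y)]) (f t))%R.
  by rewrite /Phi set_itvNyc.
have PhiF : (@Phi R) = (fun y => \int[mu]_(t in [set` Interval -oo%O (BRight y)]) (f t))%R.
  exact: funext PhiF0.
have intf : mu.-integrable [set` Interval -oo%O (BRight (x + 1))] (EFin \o f).
  apply: (integrableS measurableT _ (subsetT _)).
    exact: measurable_itv.
  exact: integrable_normal_pdf.
have cf : {for x, continuous f}.
  have h : continuous f by apply: continuous_normal_pdf; rewrite oner_eq0.
  exact: h.
have x1 : x < x + 1 by rewrite ltrDl.
have [d1 d2] := continuous_FTC1 x1 intf (ltNyr _) cf.
rewrite PhiF; rewrite derive1E in d2.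
have -> : normal_pdf 0 1 x = f x by [].
rewrite -d2.
exact: derivableP.
Qed.
Lemma lstar_ge0 (c : R) : 1 < c -> 0 <= lambda_star c.
Proof.
move=> c1; rewrite /lambda_star mulr_ge0 ?sqrtr_ge0 // divr_ge0 //.
  nra.
apply: mulr_ge0; [exact: sqrtr_ge0| exact: powR_ge0].
Qed.
Lemma lstar_sqr (c : R) : 1 < c ->
  lambda_star c ^+ 2 = (c ^+ 2 - 1) ^+ 2 / (2 * c ^+ 3) * ln ((c + 1) / (c - 1)).
Proof.
move=> c1.
have c0 : 0 <= c by rewrite ltW // (lt_trans _ c1).
have hL : 0 <= ln ((c + 1) / (c - 1)).
  rewrite ln_ge0 // ler_pdivlMr; lra.
rewrite /lambda_star exprMn sqr_sqrtr // exprMn exprVn exprMn sqr_sqrtr //.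
have -> : powR c (3 / 2) ^+ 2 = c ^+ 3.
  rewrite -powR_mulrn ?powR_ge0 // -powRrM.
  have -> : 3 / 2 * 2%:R = 3%:R :> R by rewrite -[2%:R]/2; field.
  by rewrite powR_mulrn.
by [].
Qed.

Lemma pdf01E (y : R) : normal_pdf 0 1 y = normal_peak 1 * expR (- y ^+ 2 / 2).
Proof. by rewrite /normal_pdf oner_eq0 /normal_fun subr0 expr1n. Qed.

Lemma key (c l : R) : 1 < c -> 0 <= l ->
  (c / (c + 1) * normal_pdf 0 1 (c / (c + 1) * l) <=
   c / (c - 1) * normal_pdf 0 1 (c / (c - 1) * l)) = (l <= lambda_star c).
Proof.
move=> c1 l0.
have c0 : 0 < c by rewrite (lt_trans _ c1).
have c1p : 0 < c + 1 by lra.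
have c1m : 0 < c - 1 by lra.
set a := c / (c + 1); set b := c / (c - 1).
have a0 : 0 < a by rewrite divr_gt0.
have b0 : 0 < b by rewrite divr_gt0.
set L := ln ((c + 1) / (c - 1)).
have hba : (c + 1) / (c - 1) = b / a.
  by rewrite /a /b; field; rewrite ?gt_eqF //; lra.
have hL : ln b = ln a + L.
  by rewrite /L hba ln_div ?posrE // addrC subrK.
rewrite !pdf01E mulrCA [X in _ <= X]mulrCA ler_pM2l; last first.
  by apply: normal_peak_gt0; rewrite oner_eq0.
rewrite -{1}(lnK a0) -{1}(lnK b0) -!expRD ler_expR.
have K0 : 0 < c ^+ 2 - 1 by nra.
rewrite -subr_ge0.
have -> : ln b + - (b * l) ^+ 2 / 2 - (ln a + - (a * l) ^+ 2 / 2) =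
   ((c ^+ 2 - 1) ^+ 2 * L - 2 * c ^+ 3 * l ^+ 2) / (c ^+ 2 - 1) ^+ 2.
  rewrite hL /a /b; field; rewrite ?gt_eqF //; nra.
rewrite pmulr_lge0 ?invr_gt0 ?exprn_gt0 // subr_ge0.
have -> : (l <= lambda_star c) = (l ^+ 2 <= lambda_star c ^+ 2).
  by rewrite ler_sqr ?nnegrE ?lstar_ge0.
rewrite lstar_sqr // -/L.
have c3 : 0 < 2 * c ^+ 3 by rewrite mulr_gt0 // exprn_gt0.
rewrite [X in _ = (_ <= X)]mulrAC ler_pdivlMr //.
by rewrite [X in _ = (X <= _)]mulrC.
Qed.

Lemma lin_derive (k l : R) : is_derive l 1 ( *%R k) k.
Proof.
have h := is_deriveZ k (is_derive_id l 1).
exact: (is_derive_eq h (mulr1 k)).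
Qed.

Definition hh (a b : R) : R -> R := fun l => Phi (b * l) - Phi (a * l).

Lemma hh_derive (a b l : R) :
  is_derive l 1 (hh a b) (b * normal_pdf 0 1 (b * l) - a * normal_pdf 0 1 (a * l)).
Proof.
have d1 := is_derive1_comp (Phi_derive (b * l)) (lin_derive b l).
have d2 := is_derive1_comp (Phi_derive (a * l)) (lin_derive a l).
have h := is_deriveB d1 d2.
apply: (is_derive_eq h); ring.
Qed.

Lemma hh_derive1 (a b l : R) :
  (hh a b)^`()%classic l = b * normal_pdf 0 1 (b * l) - a * normal_pdf 0 1 (a * l).
Proof. by rewrite derive1E; apply: derive_val; exact: hh_derive. Qed.

Lemma hh_cont (a b : R) (i : interval R) : {within [set` i], continuous (hh a b)}.
Proof.
apply: derivable_within_continuous => x _.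
have h := hh_derive a b x.
exact: (@ex_derive _ _ _ _ _ _ _ h).
Qed.

Lemma hh_max (c l : R) : 1 < c -> 0 <= l ->
  hh (c / (c + 1)) (c / (c - 1)) l <= hh (c / (c + 1)) (c / (c - 1)) (lambda_star c).
Proof.
move=> c1 l0.
have [ll|ll] := lerP l (lambda_star c).
- apply: (@ger0_derive1_le_cc _ _ l (lambda_star c)).
  + move=> x _; have h := hh_derive (c / (c + 1)) (c / (c - 1)) x.
    exact: (@ex_derive _ _ _ _ _ _ _ h).
  + move=> x; rewrite in_itv /= => /andP[lx xs].
    rewrite hh_derive1 subr_ge0 key //; first exact: ltW.
    exact: le_trans l0 (ltW lx).
  + exact: hh_cont.
  + by rewrite in_itv /= lexx ll.
  + by rewrite in_itv /= lexx ll.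
  + exact: ll.
- apply: (@ler0_derive1_le_cc _ _ (lambda_star c) l).
  + move=> x _; have h := hh_derive (c / (c + 1)) (c / (c - 1)) x.
    exact: (@ex_derive _ _ _ _ _ _ _ h).
  + move=> x; rewrite in_itv /= => /andP[sx xl].
    rewrite hh_derive1 subr_le0.
    have x0 : 0 <= x := le_trans (lstar_ge0 c c1) (ltW sx).
    have K := @key c x c1 x0.
    apply: ltW; rewrite ltNge K -ltNge; exact: sx.
  + exact: hh_cont.
  + by rewrite in_itv /= lexx ltW.
  + by rewrite in_itv /= lexx ltW.
  + exact: ltW.
Qed.

Lemma peak_le : normal_peak (1 : R) <= 1 / 2.
Proof.
rewrite /normal_peak expr1n mul1r.
set X := pi *+ 2.
have X4 : 4 <= X by rewrite /X -mulr_natr; have := @pi_ge2 R; lra.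
have s0 : 0 <= Num.sqrt X by exact: sqrtr_ge0.
have sX : Num.sqrt X ^+ 2 = X by rewrite sqr_sqrtr // (le_trans _ X4).
have s2 : 2 <= Num.sqrt X by nra.
have sp : 0 < Num.sqrt X by lra.
have hinv : (Num.sqrt X)^-1 * Num.sqrt X = 1 by rewrite mulVf // gt_eqF.
have hi : 0 < (Num.sqrt X)^-1 by rewrite invr_gt0.
nra.
Qed.

Lemma texp_le (t : R) : 0 <= t -> t * expR (- t ^+ 2 / 2) <= 1.
Proof.
move=> t0.
rewrite mulNr expRN ler_pdivrMr ?expR_gt0 // mul1r.
have := expR_ge1Dx (t ^+ 2 / 2); nra.
Qed.

Lemma hh_bound (c l : R) : 1 < c -> 0 <= l ->
  hh (c / (c + 1)) (c / (c - 1)) l <= 1 / (c - 1).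
Proof.
move=> c1 l0.
have c0 : 0 < c by rewrite (lt_trans _ c1).
have c1p : 0 < c + 1 by lra.
have c1m : 0 < c - 1 by lra.
set a := c / (c + 1); set b := c / (c - 1).
have a0 : 0 <= a by rewrite divr_ge0 // ltW.
have ab : a <= b.
  rewrite /a /b ler_pdivrMr // mulrAC ler_pdivlMr //; nra.
have hab : a * l <= b * l by rewrite ler_wpM2r.
have cP : {within `[a * l, b * l], continuous (@Phi R)}.
  apply: derivable_within_continuous => x _.
  have h := Phi_derive x; exact: (@ex_derive _ _ _ _ _ _ _ h).
have [xi hxi E] := MVT_segment hab (fun x _ => Phi_derive x) cP.
rewrite /hh E.
set t := a * l.
have t0 : 0 <= t by rewrite mulr_ge0.
move: hxi; rewrite in_itv /= => /andP[txi xib].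
have hpk : 0 < normal_peak (1 : R) by apply: normal_peak_gt0; rewrite oner_eq0.
have hphi : normal_pdf 0 1 xi <= normal_peak 1 * expR (- t ^+ 2 / 2).
  rewrite pdf01E ler_pM2l // ler_expR ler_pM2r ?invr_gt0 // lerN2.
  rewrite /t in t0 *; nra.
have hd : b * l - t = 2 / (c - 1) * t.
  rewrite /t /a /b; field; rewrite ?gt_eqF //; lra.
rewrite hd.
have ht := texp_le t t0.
have hp := peak_le.
have he : 0 <= expR (- t ^+ 2 / 2) by exact: expR_ge0.
have hk : 0 < 1 / (c - 1) by rewrite divr_gt0.
have -> : 2 / (c - 1) = 2 * (1 / (c - 1)) by rewrite mulrA mulr1.
set k := 1 / (c - 1).
apply: (@le_trans _ _ (normal_peak 1 * expR (- t ^+ 2 / 2) * (2 * k * t))).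
  apply: ler_wpM2r; last exact: hphi.
  by rewrite mulr_ge0 // mulr_ge0 // ltW.
have hu : 0 <= t * expR (- t ^+ 2 / 2) by rewrite mulr_ge0.
set u := t * expR (- t ^+ 2 / 2) in ht hu.
have -> : normal_peak 1 * expR (- t ^+ 2 / 2) * (2 * k * t) = k * (2 * normal_peak 1 * u).
  by rewrite /u; ring.
rewrite -[X in _ <= X]mulr1 ler_pM2l //; nra.
Qed.
End S.

Theorem corollary1 (R : realType) :
  (forall c : R, 1 < c ->
     (* depends on (mu, sigma) only through lambda = mu/sigma, evenly *)
     (exists g : R -> \bar R,
        (forall l : R, g (- l) = g l) /\
        (forall mu sigma : R, 0 < sigma -> coverage mu sigma c = g (mu / sigma)))
     (* closed form with lambda = |mu|/sigma *)
     /\ (forall mu sigma : R, 0 < sigma ->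
           coverage mu sigma c = (P1 (`|mu| / sigma) c)%:E)
     (* minimizer over lambda >= 0 *)
     /\ 0 <= lambda_star c
     /\ (forall l : R, 0 <= l -> P1 (lambda_star c) c <= P1 l c))
  /\
  (forall alpha : R, 0 < alpha < 1 / 2 ->
     exists c : R, 1 < c /\
       (forall mu sigma : R, 0 < sigma ->
          ((1 - alpha)%:E <= coverage mu sigma c)%E)).
Proof.
have P1hh (c x : R) : P1 x c = 1 - hh R (c / (c + 1)) (c / (c - 1)) x.
  by rewrite /P1 /hh; ring.
split.
- move=> c c1; split.
    exists (fun l => (P1 `|l| c)%:E); split.
      by move=> l; rewrite normrN.
    move=> m s s0; rewrite coverage_P1 //.
    by rewrite normf_div (gtr0_norm s0).
  split; first by move=> m s s0; exact: coverage_P1.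
  split; first exact: lstar_ge0.
  move=> l l0; rewrite !P1hh.
  have := @hh_max R _ _ c1 l0; lra.
- move=> alpha /andP[a0 a2].
  have ia : 0 < 1 / alpha by rewrite divr_gt0.
  exists (1 + 1 / alpha); split; first lra.
  move=> m s s0.
  have c1 : 1 < 1 + 1 / alpha by lra.
  rewrite coverage_P1 // lee_fin P1hh.
  have l0 : 0 <= `|m| / s by rewrite divr_ge0 // ltW.
  have := @hh_bound R _ _ c1 l0.
  have -> : 1 / (1 + 1 / alpha - 1) = alpha.
    by rewrite addrAC subrr add0r; field; rewrite gt_eqF.
  lra.
Qed.
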